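(* Let $\gamma$, $r$ be as in the context, fix $s_0$, and let $\epsilon>0$ be a sufficiently small number. Let $F:A_{s_0,\epsilon}\to\mathbb{R}$ be a $C^\infty$ function such that for every $s$ with $|s-s_0|<\epsilon$ the restriction of $F$ to the circle $C_s$ coincides with the restriction to $C_s$ of some polynomial $F_s$ in two variables of degree at most $N$. Then $F$ is (the restriction of) a polynomial in $x_1,x_2$ of degree at most $2N$.
   Context: $\gamma$ is a smooth simple closed curve in $\mathbb{R}^2$ parametrized by arc length $s$, $r>0$ is less than half of the maximal radius of a tubular neighbourhood of $\gamma$. For each $s$, $C_s=\{x:|x-\gamma(s)|=r\}$, and $A_{s_0,\epsilon}=\bigcup_{s:|s-s_0|\le\epsilon}C_s$. *)

(* Defs.v *)
From Stdlib Require Import Reals List.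
From Coquelicot Require Import Coquelicot.
Open Scope R_scope.

Definition smooth1 (g : R -> R) : Prop := forall (n : nat) (x : R), ex_derive_n g n x.

(** Iterated partial derivatives of f : R -> R -> R along a word w
    (true = d/dx1, false = d/dx2), applied left to right. *)
Fixpoint pderiv (w : list bool) (f : R -> R -> R) : R -> R -> R :=
  match w with
  | nil => f
  | b :: w' =>
      pderiv w' (if b then (fun x y => Derive (fun t => f t y) x)
                      else (fun x y => Derive (fun t => f x t) y))
  end.

Definition smooth2 (f : R -> R -> R) : Prop :=
  forall (w : list bool) (x y : R),
    ex_derive (fun t => pderiv w f t y) x /\
    ex_derive (fun t => pderiv w f x t) y /\
    continuous (fun p : R * R => pderiv w f (fst p) (snd p)) (x, y).

Definition is_poly2 (d : nat) (P : R -> R -> R) : Prop :=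
  exists c : nat -> nat -> R, forall x y : R,
    P x y = sum_f_R0 (fun i => sum_f_R0 (fun j => c i j * x ^ i * y ^ j) (d - i)) d.

Definition arclength_simple_closed_curve (g1 g2 : R -> R) (L : R) : Prop :=
  smooth1 g1 /\ smooth1 g2 /\ 0 < L /\
  (forall s, g1 (s + L) = g1 s /\ g2 (s + L) = g2 s) /\
  (forall s t, 0 <= s < L -> 0 <= t < L -> g1 s = g1 t -> g2 s = g2 t -> s = t) /\
  (forall s, (Derive g1 s) ^ 2 + (Derive g2 s) ^ 2 = 1).

(** The normal map (s,t) |-> gamma(s) + t * nu(s), nu = unit normal
    (-g2', g1'), is injective on [0,L) x (-rho, rho): gamma has a tubular
    neighbourhood of radius rho. *)
Definition tubular_radius (g1 g2 : R -> R) (L rho : R) : Prop :=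
  0 < rho /\
  forall s t s' t', 0 <= s < L -> 0 <= s' < L ->
    Rabs t < rho -> Rabs t' < rho ->
    g1 s - t * Derive g2 s = g1 s' - t' * Derive g2 s' ->
    g2 s + t * Derive g1 s = g2 s' + t' * Derive g1 s' ->
    s = s' /\ t = t'.

Definition on_circle (g1 g2 : R -> R) (r s x1 x2 : R) : Prop :=
  (x1 - g1 s) ^ 2 + (x2 - g2 s) ^ 2 = r ^ 2.

Definition in_A (g1 g2 : R -> R) (r s0 eps x1 x2 : R) : Prop :=
  exists s, Rabs (s - s0) <= eps /\ on_circle g1 g2 r s x1 x2.

(* Main.v *)
Require Import Defs.
From Stdlib Require Import Reals.
From Coquelicot Require Import Coquelicot.
From Stdlib Require Import Lra Lia Psatz List FunctionalExtensionality Classical ZArith.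
Open Scope R_scope.

Inductive pol : nat -> (R -> R -> R) -> Prop :=
| pol_const d c : pol d (fun _ _ => c)
| pol_add d f g : pol d f -> pol d g -> pol d (fun x y => f x y + g x y)
| pol_mulx d f : pol d f -> pol (S d) (fun x y => x * f x y)
| pol_muly d f : pol d f -> pol (S d) (fun x y => y * f x y)
| pol_weak d f : pol d f -> pol (S d) f.

Lemma pol_ext d f g : pol d f -> (forall x y, f x y = g x y) -> pol d g.
Proof.
  intros H E. replace g with f; auto.
  apply functional_extensionality; intro x; apply functional_extensionality; auto.
Qed.

Lemma pol_le d d' f : (d <= d')%nat -> pol d f -> pol d' f.
Proof. induction 1; auto. intros; apply pol_weak; auto. Qed.

Lemma pol_scal d f c : pol d f -> pol d (fun x y => c * f x y).
Proof.
  induction 1.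
  - apply pol_const.
  - eapply pol_ext. apply (pol_add _ _ _ IHpol1 IHpol2). intros; simpl; ring.
  - eapply pol_ext. apply (pol_mulx _ _ IHpol). intros; simpl; ring.
  - eapply pol_ext. apply (pol_muly _ _ IHpol). intros; simpl; ring.
  - apply pol_weak; auto.
Qed.

Lemma pol_mul d1 d2 f g : pol d1 f -> pol d2 g -> pol (d1 + d2) (fun x y => f x y * g x y).
Proof.
  intros Hf Hg; induction Hf.
  - eapply pol_le; [|apply pol_scal; eauto]. lia.
  - eapply pol_ext. apply (pol_add _ _ _ IHHf1 IHHf2). intros; simpl; ring.
  - eapply pol_ext. apply (pol_mulx _ _ IHHf). intros; simpl; ring.
  - eapply pol_ext. apply (pol_muly _ _ IHHf). intros; simpl; ring.
  - apply pol_weak; auto.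
Qed.

Lemma pol_x : pol 1 (fun x y => x).
Proof. eapply pol_ext. apply pol_mulx, (pol_const 0 1). intros; simpl; ring. Qed.
Lemma pol_y : pol 1 (fun x y => y).
Proof. eapply pol_ext. apply pol_muly, (pol_const 0 1). intros; simpl; ring. Qed.

Lemma pol_opp d f : pol d f -> pol d (fun x y => - f x y).
Proof. intro H; eapply pol_ext. apply (pol_scal _ _ (-1) H). intros; cbv beta; ring. Qed.

Lemma pol_sub d f g : pol d f -> pol d g -> pol d (fun x y => f x y - g x y).
Proof. intros Hf Hg; eapply pol_ext. apply (pol_add _ _ _ Hf (pol_opp _ _ Hg)). intros; cbv beta; ring. Qed.

Lemma pol_aff a b c : pol 1 (fun x y => a * x + b * y + c).
Proof.
  apply pol_add. apply pol_add. apply pol_scal, pol_x. apply pol_scal, pol_y.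
  apply pol_const.
Qed.

Lemma pol_subst d f u w : pol d f -> pol 1 u -> pol 1 w ->
  pol d (fun x y => f (u x y) (w x y)).
Proof.
  intros Hf Hu Hw; induction Hf.
  - apply pol_const.
  - apply pol_add; auto.
  - replace (S d) with (1 + d)%nat by lia. apply pol_mul; auto.
  - replace (S d) with (1 + d)%nat by lia. apply pol_mul; auto.
  - apply pol_weak; auto.
Qed.

Lemma pol_powx n : pol n (fun x y => x ^ n).
Proof.
  induction n. eapply pol_ext. apply (pol_const 0 1). intros; simpl; auto. eapply pol_ext. apply pol_mulx; eauto. intros; simpl; ring.
Qed.
Lemma pol_powy n : pol n (fun x y => y ^ n).
Proof.
  induction n. eapply pol_ext. apply (pol_const 0 1). intros; simpl; auto. eapply pol_ext. apply pol_muly; eauto. intros; simpl; ring.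
Qed.

Lemma pol_sum d n (F : nat -> R -> R -> R) : (forall i, (i <= n)%nat -> pol d (F i)) ->
  pol d (fun x y => sum_f_R0 (fun i => F i x y) n).
Proof.
  induction n; intros H; cbn [sum_f_R0].
  - apply H; lia.
  - apply pol_add. apply IHn; intros; apply H; lia. apply H; lia.
Qed.

Lemma is_poly2_pol d P : is_poly2 d P -> pol d P.
Proof.
  intros [c Hc]. eapply pol_ext; [| intros; symmetry; apply Hc].
  apply pol_sum; intros i Hi. apply pol_sum; intros j Hj.
  eapply pol_le with (i + j)%nat. lia.
  eapply pol_ext. apply pol_mul. apply pol_mul with (d1 := 0%nat). apply (pol_const 0 (c i j)).
  apply pol_powx. apply pol_powy. intros; simpl; ring.
Qed.

Fixpoint mons (L : list (R * nat * nat)) (x y : R) : R :=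
  match L with
  | nil => 0
  | (k, i, j) :: L' => k * x ^ i * y ^ j + mons L' x y
  end.

Lemma mons_app L1 L2 x y : mons (L1 ++ L2) x y = mons L1 x y + mons L2 x y.
Proof. induction L1 as [|[[k i] j] L1 IH]; simpl. ring. rewrite IH; ring. Qed.
Lemma mons_mx L x y : mons (map (fun t => match t with (k, i, j) => (k, S i, j) end) L) x y = x * mons L x y.
Proof. induction L as [|[[k i] j] L IH]; simpl. ring. rewrite IH; ring. Qed.
Lemma mons_my L x y : mons (map (fun t => match t with (k, i, j) => (k, i, S j) end) L) x y = y * mons L x y.
Proof. induction L as [|[[k i] j] L IH]; simpl. ring. rewrite IH; ring. Qed.

Lemma pol_mons d f : pol d f -> exists L, (forall k i j, In (k, i, j) L -> (i + j <= d)%nat)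
   /\ forall x y, f x y = mons L x y.
Proof.
  induction 1.
  - exists ((c, 0%nat, 0%nat) :: nil). split. intros k i j [H|[]]. inversion H; lia.
    intros; simpl; ring.
  - destruct IHpol1 as [L1 [H1 E1]]. destruct IHpol2 as [L2 [H2 E2]].
    exists (L1 ++ L2). split. intros k i j Hin. apply in_app_or in Hin as [|]; eauto.
    intros x y. rewrite E1, E2. symmetry; apply mons_app.
  - destruct IHpol as [L [H1 E1]].
    exists (map (fun t => match t with (k, i, j) => (k, S i, j) end) L). split.
    intros k i j Hin. apply in_map_iff in Hin as [[[k' i'] j'] [Heq Hin]].
    inversion Heq; subst. specialize (H1 _ _ _ Hin). lia.
    intros x y. rewrite E1. symmetry; apply mons_mx.
  - destruct IHpol as [L [H1 E1]].
    exists (map (fun t => match t with (k, i, j) => (k, i, S j) end) L). split.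
    intros k i j Hin. apply in_map_iff in Hin as [[[k' i'] j'] [Heq Hin]].
    inversion Heq; subst. specialize (H1 _ _ _ Hin). lia.
    intros x y. rewrite E1. symmetry; apply mons_my.
  - destruct IHpol as [L [H1 E1]]. exists L. split; auto. intros; specialize (H1 _ _ _ H0); lia.
Qed.

Lemma sum_ind_0 (k m : nat) (v : R) : (m < k)%nat ->
  sum_f_R0 (fun i => if Nat.eqb i k then v else 0) m = 0.
Proof.
  induction m as [|m IHm]; intros H; cbn [sum_f_R0].
  - destruct (Nat.eqb_spec 0 k); [lia|auto].
  - destruct (Nat.eqb_spec (S m) k); [lia|]. rewrite IHm; [ring|lia].
Qed.

Lemma sum_ind_R (k n : nat) (v : R) : (k <= n)%nat ->
  sum_f_R0 (fun i => if Nat.eqb i k then v else 0) n = v.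
Proof.
  induction n; intros H; cbn [sum_f_R0].
  - assert (k = 0%nat) by lia; subst; simpl; auto.
  - destruct (Nat.eq_dec k (S n)).
    + subst. rewrite Nat.eqb_refl. rewrite sum_ind_0; [ring|lia].
    + destruct (Nat.eqb_spec (S n) k); [lia|]. rewrite IHn; [ring|lia].
Qed.

Lemma is_poly2_mono d k i j : (i + j <= d)%nat ->
  is_poly2 d (fun x y => k * x ^ i * y ^ j).
Proof.
  intros H. exists (fun i' j' => if Nat.eqb i' i then if Nat.eqb j' j then k else 0 else 0).
  intros x y.
  transitivity (sum_f_R0 (fun i0 => if Nat.eqb i0 i then k * x ^ i * y ^ j else 0) d).
  - symmetry; apply sum_ind_R; lia.
  - apply sum_eq; intros i0 Hi0. destruct (Nat.eqb_spec i0 i).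
    + subst. transitivity (sum_f_R0 (fun j0 => if Nat.eqb j0 j then k * x ^ i * y ^ j else 0) (d - i)).
      symmetry; apply sum_ind_R; lia.
      apply sum_eq; intros j0 _. destruct (Nat.eqb_spec j0 j); subst; ring.
    + symmetry. apply sum_eq_R0. intros; cbv beta; ring.
Qed.

Lemma is_poly2_add d f g : is_poly2 d f -> is_poly2 d g -> is_poly2 d (fun x y => f x y + g x y).
Proof.
  intros [c Hc] [c' Hc']. exists (fun i j => c i j + c' i j). intros x y.
  rewrite Hc, Hc', <- sum_plus. apply sum_eq; intros i _. rewrite <- sum_plus.
  apply sum_eq; intros; cbv beta; ring.
Qed.

Lemma is_poly2_zero d : is_poly2 d (fun _ _ => 0).
Proof.
  exists (fun _ _ => 0). intros. symmetry. apply sum_eq_R0; intros. apply sum_eq_R0; intros. ring.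
Qed.

Lemma pol_is_poly2 d P : pol d P -> is_poly2 d P.
Proof.
  intros H. destruct (pol_mons _ _ H) as [L [HL E]].
  assert (is_poly2 d (mons L)).
  { clear E. induction L as [|[[k i] j] L IH]; simpl.
    - apply is_poly2_zero.
    - apply (is_poly2_add d (fun x y => k * x ^ i * y ^ j) (mons L)).
      apply is_poly2_mono. eapply HL; left; eauto.
      apply IH. intros; eapply HL; right; eauto. }
  replace P with (mons L); auto.
  apply functional_extensionality; intro x; apply functional_extensionality; auto.
Qed.

Inductive upol : nat -> (R -> R) -> Prop :=
| up_const d c : upol d (fun _ => c)
| up_add d f g : upol d f -> upol d g -> upol d (fun x => f x + g x)
| up_mulx d f : upol d f -> upol (S d) (fun x => x * f x)
| up_weak d f : upol d f -> upol (S d) f.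

Lemma upol_ext d f g : upol d f -> (forall x, f x = g x) -> upol d g.
Proof. intros H E. replace g with f; auto. apply functional_extensionality; auto. Qed.

Lemma upol_le d d' f : (d <= d')%nat -> upol d f -> upol d' f.
Proof. induction 1; auto. intros; apply up_weak; auto. Qed.

Lemma upol_scal d f c : upol d f -> upol d (fun x => c * f x).
Proof.
  induction 1.
  - apply up_const.
  - eapply upol_ext. apply (up_add _ _ _ IHupol1 IHupol2). intros; cbv beta; ring.
  - eapply upol_ext. apply (up_mulx _ _ IHupol). intros; cbv beta; ring.
  - apply up_weak; auto.
Qed.

Lemma upol_pol d f : upol d f -> pol d (fun x _ => f x).
Proof.
  induction 1.
  - apply pol_const.
  - apply pol_add; auto.
  - apply (pol_mulx _ _ IHupol).
  - apply pol_weak; auto.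
Qed.

Lemma upol_0_const A : upol 0 A -> forall x, A x = A 0.
Proof.
  intros H. remember 0%nat as d. induction H; intros; auto.
  - rewrite IHupol1, IHupol2; auto.
  - discriminate.
  - discriminate.
Qed.

Lemma upol_factor m A a : upol m A -> exists A1, upol (pred m) A1 /\
  forall x, A x = (x - a) * A1 x + A a.
Proof.
  induction 1.
  - exists (fun _ => 0). split. apply up_const. intros; ring.
  - destruct IHupol1 as [A1 [H1 E1]]. destruct IHupol2 as [B1 [H2 E2]].
    exists (fun x => A1 x + B1 x). split. apply up_add; auto.
    intros x. rewrite (E1 x), (E2 x). ring.
  - destruct IHupol as [A1 [H1 E1]].
    exists (fun x => f x + a * A1 x). split.
    + simpl. apply up_add. auto. apply upol_scal. eapply upol_le; [|eauto]. lia.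
    + intros x. rewrite (E1 x). ring.
  - destruct IHupol as [A1 [H1 E1]]. exists A1. split; auto.
    eapply upol_le; [|eauto]. lia.
Qed.

Lemma upol_zero d : upol d (fun _ => 0).
Proof. apply up_const. Qed.

Lemma pol_red m D : pol m D -> exists A B, upol m A /\ upol (pred m) B /\
  (m = 0%nat -> forall x, B x = 0) /\
  forall x y, x^2 + y^2 = 1 -> D x y = A x + y * B x.
Proof.
  induction 1.
  - exists (fun _ => c), (fun _ => 0). repeat split; try apply up_const. intros; ring.
  - destruct IHpol1 as [A1 [B1 [HA1 [HB1 [Z1 E1]]]]].
    destruct IHpol2 as [A2 [B2 [HA2 [HB2 [Z2 E2]]]]].
    exists (fun x => A1 x + A2 x), (fun x => B1 x + B2 x). repeat split.
    apply up_add; auto. apply up_add; auto.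
    intros Hd x. rewrite Z1, Z2; auto; ring.
    intros x y Hxy. rewrite E1, E2; auto; ring.
  - destruct IHpol as [A [B [HA [HB [Z E]]]]].
    exists (fun x => x * A x), (fun x => x * B x). repeat split.
    apply up_mulx; auto.
    destruct d as [|d].
    + eapply upol_ext. apply (up_const 0 0). intros; simpl. rewrite Z; auto; ring.
    + simpl. apply up_mulx; auto.
    + discriminate.
    + intros x y Hxy. rewrite E; auto; ring.
  - destruct IHpol as [A [B [HA [HB [Z E]]]]].
    exists (fun x => B x - x * (x * B x)), A. repeat split.
    + destruct d as [|d].
      * eapply upol_ext. apply (up_const 1 0). intros; simpl. rewrite Z; auto; ring.
      * eapply upol_ext. apply up_add. apply upol_le with d. lia. exact HB.
        apply upol_scal with (c := -1). apply up_mulx, up_mulx. exact HB.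
        intros; cbv beta; ring.
    + simpl; auto.
    + discriminate.
    + intros x y Hxy. rewrite E; auto.
      replace (y * y) with (1 - x^2) by nra. ring_simplify. 
      replace (y^2) with (1 - x^2) by lra. ring.
  - destruct IHpol as [A [B [HA [HB [Z E]]]]].
    exists A, B. repeat split; auto.
    + apply up_weak; auto.
    + destruct d as [|d].
      * eapply upol_ext. apply (up_const 0 0). intros; simpl. rewrite Z; auto.
      * simpl. apply upol_le with d. lia. exact HB.
    + discriminate.
Qed.

Lemma unit_div m G a h : pol m G -> 0 < h -> a^2 + h^2 = 1 ->
  G a h = 0 -> G a (-h) = 0 ->
  exists R', pol (pred m) R' /\
    (forall U V, U^2 + V^2 = 1 -> G U V = (U - a) * R' U V) /\
    (m = 0%nat -> forall U V, U^2 + V^2 = 1 -> G U V = 0).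
Proof.
  intros HG Hh Hah G1 G2.
  destruct (pol_red _ _ HG) as [A [B [HA [HB [Z E]]]]].
  assert (Ea : A a + h * B a = 0) by (rewrite <- E; auto).
  assert (Eb : A a + - h * B a = 0) by (rewrite <- E; auto; nra).
  assert (Aa : A a = 0) by nra.
  assert (Ba : B a = 0) by nra.
  destruct (upol_factor _ _ a HA) as [A1 [HA1 EA]].
  destruct (upol_factor _ _ a HB) as [B1 [HB1 EB]].
  destruct m as [|[|m]].
  - exists (fun _ _ => 0). split. apply pol_const. split.
    + intros U V HUV. rewrite E; auto. rewrite Z; auto.
      rewrite (upol_0_const _ HA U), <- (upol_0_const _ HA a), Aa. ring.
    + intros _ U V HUV. rewrite E; auto. rewrite Z; auto.
      rewrite (upol_0_const _ HA U), <- (upol_0_const _ HA a), Aa. ring.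
  - exists (fun U _ => A1 U). split. apply upol_pol; auto. split.
    + intros U V HUV. rewrite E; auto. simpl in HB.
      rewrite (upol_0_const _ HB U), <- (upol_0_const _ HB a), Ba.
      rewrite (EA U), Aa. ring.
    + discriminate.
  - exists (fun U V => A1 U + V * B1 U). split.
    + simpl in *. apply pol_add. apply (upol_pol _ _ HA1).
      apply pol_muly. apply upol_pol. exact HB1.
    + split. intros U V HUV. rewrite E; auto. rewrite (EA U), (EB U), Aa, Ba. ring.
      discriminate.
Qed.

Inductive lp : nat -> (R -> R -> R) -> Prop :=
| lp_const d c : lp d (fun _ _ => c)
| lp_add d f g : lp d f -> lp d g -> lp d (fun x y => f x y + g x y)
| lp_mulx d f : lp d f -> lp (S d) (fun x y => x * f x y)
| lp_muly d f : lp d f -> lp (S d) (fun x y => y * f x y)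
| lp_mulw d f : lp d f -> lp (S d) (fun x y => (x^2 + y^2) * f x y)
| lp_weak d f : lp d f -> lp (S d) f.

Lemma lp_ext d f g : lp d f -> (forall x y, f x y = g x y) -> lp d g.
Proof.
  intros H E. replace g with f; auto.
  apply functional_extensionality; intro x; apply functional_extensionality; auto.
Qed.

Lemma lp_le d d' f : (d <= d')%nat -> lp d f -> lp d' f.
Proof. induction 1; auto. intros; apply lp_weak; auto. Qed.

Lemma pol_lp d f : pol d f -> lp d f.
Proof.
  induction 1. apply lp_const. apply lp_add; auto. apply lp_mulx; auto.
  apply lp_muly; auto. apply lp_weak; auto.
Qed.

Lemma lp_scal d f c : lp d f -> lp d (fun x y => c * f x y).
Proof.
  induction 1.
  - apply lp_const.
  - eapply lp_ext. apply (lp_add _ _ _ IHlp1 IHlp2). intros; cbv beta; ring.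
  - eapply lp_ext. apply (lp_mulx _ _ IHlp). intros; cbv beta; ring.
  - eapply lp_ext. apply (lp_muly _ _ IHlp). intros; cbv beta; ring.
  - eapply lp_ext. apply (lp_mulw _ _ IHlp). intros; cbv beta; ring.
  - apply lp_weak; auto.
Qed.

Lemma lp_mul d1 d2 f g : lp d1 f -> lp d2 g -> lp (d1 + d2) (fun x y => f x y * g x y).
Proof.
  intros Hf Hg; induction Hf.
  - eapply lp_le; [|apply lp_scal; eauto]. lia.
  - eapply lp_ext. apply (lp_add _ _ _ IHHf1 IHHf2). intros; cbv beta; ring.
  - eapply lp_ext. apply (lp_mulx _ _ IHHf). intros; cbv beta; ring.
  - eapply lp_ext. apply (lp_muly _ _ IHHf). intros; cbv beta; ring.
  - eapply lp_ext. apply (lp_mulw _ _ IHHf). intros; cbv beta; ring.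
  - apply lp_weak; auto.
Qed.

Lemma lp_pol d f : lp d f -> pol (2 * d) f.
Proof.
  induction 1.
  - apply pol_const.
  - apply pol_add; auto.
  - eapply pol_le; [|apply (pol_mulx _ _ IHlp)]. lia.
  - eapply pol_le; [|apply (pol_muly _ _ IHlp)]. lia.
  - replace (2 * S d)%nat with (2 + 2 * d)%nat by lia. apply pol_mul; auto.
    eapply pol_ext. apply pol_add. apply pol_le with 2%nat; auto.
    replace 2%nat with (1+1)%nat by lia. apply (pol_mul _ _ _ _ pol_x pol_x).
    replace 2%nat with (1+1)%nat by lia. apply (pol_mul _ _ _ _ pol_y pol_y).
    intros; cbv beta; ring.
  - eapply pol_le; [|eauto]. lia.
Qed.

Lemma lp_circle d f c1 c2 r : lp d f -> exists g, pol d g /\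
  forall x y, (x - c1)^2 + (y - c2)^2 = r^2 -> f x y = g x y.
Proof.
  induction 1.
  - exists (fun _ _ => c). split. apply pol_const. auto.
  - destruct IHlp1 as [g1 [H1 E1]]; destruct IHlp2 as [g2 [H2 E2]].
    exists (fun x y => g1 x y + g2 x y). split. apply pol_add; auto.
    intros; rewrite E1, E2; auto.
  - destruct IHlp as [g1 [H1 E1]]. exists (fun x y => x * g1 x y). split.
    apply pol_mulx; auto. intros; rewrite E1; auto.
  - destruct IHlp as [g1 [H1 E1]]. exists (fun x y => y * g1 x y). split.
    apply pol_muly; auto. intros; rewrite E1; auto.
  - destruct IHlp as [g1 [H1 E1]].
    exists (fun x y => (2 * c1 * x + 2 * c2 * y + (r^2 - c1^2 - c2^2)) * g1 x y). split.
    apply (pol_mul 1 d). apply pol_aff. auto.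
    intros x y Hxy; rewrite E1; auto. f_equal. nra.
  - destruct IHlp as [g1 [H1 E1]]. exists g1. split; auto. apply pol_weak; auto.
Qed.

Definition Qc (b1 b2 r x y : R) := (x - b1)^2 + (y - b2)^2 - r^2.

Section Frame.
Variables c1 c2 b1 b2 r : R.
Hypothesis Hr : 0 < r.
Hypothesis Hd : 0 < (c1 - b1)^2 + (c2 - b2)^2 < 4 * r^2.

Let dl := sqrt ((c1 - b1)^2 + (c2 - b2)^2).
Let e1 := (c1 - b1) / dl.
Let e2 := (c2 - b2) / dl.
Let a := - dl / (2 * r).
Let h := sqrt (1 - a^2).
Let Uf x y := (e1 * (x - c1) + e2 * (y - c2)) / r.
Let Vf x y := (- e2 * (x - c1) + e1 * (y - c2)) / r.
Let Xf U V := c1 + r * (e1 * U - e2 * V).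
Let Yf U V := c2 + r * (e2 * U + e1 * V).

Lemma dl_pos : 0 < dl.
Proof. unfold dl; apply sqrt_lt_R0; lra. Qed.
Lemma dl_sq : dl * dl = (c1 - b1)^2 + (c2 - b2)^2.
Proof. unfold dl; apply sqrt_sqrt; lra. Qed.
Lemma e1_eq : c1 - b1 = dl * e1.
Proof. unfold e1. pose proof dl_pos. field. lra. Qed.
Lemma e2_eq : c2 - b2 = dl * e2.
Proof. unfold e2. pose proof dl_pos. field. lra. Qed.
Lemma e_unit : e1^2 + e2^2 = 1.
Proof.
  pose proof dl_pos. pose proof dl_sq. rewrite e1_eq, e2_eq in H0.
  assert (dl * dl * (e1^2 + e2^2 - 1) = 0) by nra.
  apply Rmult_integral in H1 as [H1|H1]; nra.
Qed.
Lemma a_lt : a^2 < 1.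
Proof.
  unfold a. pose proof dl_pos. pose proof dl_sq.
  assert ((- dl / (2 * r))^2 * (4 * r^2) = dl * dl) by (field; lra).
  nra.
Qed.
Lemma h_pos : 0 < h.
Proof. unfold h. apply sqrt_lt_R0. pose proof a_lt; lra. Qed.
Lemma ah_one : a^2 + h^2 = 1.
Proof. unfold h. rewrite pow2_sqrt. ring. pose proof a_lt; lra. Qed.

Lemma rot_back x y : Xf (Uf x y) (Vf x y) = x /\ Yf (Uf x y) (Vf x y) = y.
Proof.
  pose proof e_unit. split.
  - transitivity (c1 + (e1^2 + e2^2) * (x - c1)). unfold Xf, Uf, Vf. field. lra.
    rewrite H; ring.
  - transitivity (c2 + (e1^2 + e2^2) * (y - c2)). unfold Yf, Uf, Vf. field. lra.
    rewrite H; ring.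
Qed.

Lemma Qc_c_XY U V : Qc c1 c2 r (Xf U V) (Yf U V) = r^2 * (U^2 + V^2) - r^2.
Proof.
  pose proof e_unit. unfold Qc, Xf, Yf.
  replace ((c1 + r * (e1 * U - e2 * V) - c1) ^ 2 + (c2 + r * (e2 * U + e1 * V) - c2) ^ 2)
    with (r^2 * (e1^2 + e2^2) * (U^2 + V^2)) by ring. rewrite H; ring.
Qed.

Lemma Qc_b_XY U V : Qc b1 b2 r (Xf U V) (Yf U V) = r^2 * (U^2 + V^2) - r^2 + 2 * r * dl * (U - a).
Proof.
  pose proof e_unit. pose proof dl_pos. unfold Qc, Xf, Yf, a.
  replace (c1 + r * (e1 * U - e2 * V) - b1) with ((c1 - b1) + r * (e1 * U - e2 * V)) by ring.
  replace (c2 + r * (e2 * U + e1 * V) - b2) with ((c2 - b2) + r * (e2 * U + e1 * V)) by ring.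
  rewrite e1_eq, e2_eq.
  replace ((dl * e1 + r * (e1 * U - e2 * V)) ^ 2 + (dl * e2 + r * (e2 * U + e1 * V)) ^ 2)
    with ((e1^2 + e2^2) * (dl^2 + 2 * dl * r * U + r^2 * (U^2 + V^2))) by ring.
  rewrite H. field. lra.
Qed.

Lemma Qc_b_circ x y : Qc c1 c2 r x y = 0 -> Qc b1 b2 r x y = 2 * r * dl * (Uf x y - a).
Proof.
  intros H. destruct (rot_back x y) as [E1 E2].
  pose proof (Qc_b_XY (Uf x y) (Vf x y)). pose proof (Qc_c_XY (Uf x y) (Vf x y)).
  rewrite E1, E2 in *. lra.
Qed.

Lemma UV_circ x y : Qc c1 c2 r x y = 0 -> (Uf x y)^2 + (Vf x y)^2 = 1.
Proof.
  intros H. destruct (rot_back x y) as [E1 E2].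
  pose proof (Qc_c_XY (Uf x y) (Vf x y)). rewrite E1, E2 in *.
  assert (r^2 * ((Uf x y)^2 + (Vf x y)^2 - 1) = 0) by lra.
  apply Rmult_integral in H1 as [H1|H1]; nra.
Qed.

Lemma inter_two x y : Qc c1 c2 r x y = 0 -> Qc b1 b2 r x y = 0 ->
  (x = Xf a h /\ y = Yf a h) \/ (x = Xf a (-h) /\ y = Yf a (-h)).
Proof.
  intros H1 H2. pose proof (Qc_b_circ x y H1) as Hb. pose proof (UV_circ x y H1) as Huv.
  pose proof dl_pos as Hdl. pose proof ah_one as Hah. pose proof h_pos as Hh.
  assert (Ua : Uf x y = a).
  { assert (HH : 2 * r * dl * (Uf x y - a) = 0) by lra.
    apply Rmult_integral in HH as [HH|HH]; [|lra]. nra. }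
  destruct (rot_back x y) as [E1 E2].
  assert (HV : Vf x y = h \/ Vf x y = - h).
  { assert (HH : (Vf x y - h) * (Vf x y + h) = 0) by (rewrite Ua in Huv; nra).
    apply Rmult_integral in HH as [|]; [left|right]; lra. }
  destruct HV as [V|V]; [left|right]; rewrite <- Ua, <- V; auto.
Qed.

Lemma single_div m g : pol m g ->
  (forall x y, Qc c1 c2 r x y = 0 -> Qc b1 b2 r x y = 0 -> g x y = 0) ->
  exists Rq, pol (pred m) Rq /\
    (forall x y, Qc c1 c2 r x y = 0 -> g x y = Qc b1 b2 r x y * Rq x y) /\
    (m = 0%nat -> forall x y, Qc c1 c2 r x y = 0 -> g x y = 0).
Proof.
  intros Hg Hz.
  pose proof ah_one. pose proof h_pos. pose proof dl_pos.
  set (G := fun U V => g (Xf U V) (Yf U V)).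
  assert (HG : pol m G).
  { apply (pol_subst m g Xf Yf); auto; unfold Xf, Yf.
    eapply pol_ext. apply (pol_aff (r * e1) (- (r * e2)) c1). intros; cbv beta; ring.
    eapply pol_ext. apply (pol_aff (r * e2) (r * e1) c2). intros; cbv beta; ring. }
  assert (Gz : forall V, V^2 = h^2 -> G a V = 0).
  { intros V HV. unfold G. apply Hz.
    rewrite Qc_c_XY. replace (a^2 + V^2) with 1 by lra. ring.
    rewrite Qc_b_XY. replace (a^2 + V^2) with 1 by lra. ring. }
  destruct (unit_div m G a h HG H0 H) as [R' [HR' [E Z]]].
  apply Gz; auto. apply Gz; ring.
  exists (fun x y => / (2 * r * dl) * R' (Uf x y) (Vf x y)). split.
  - apply pol_scal. apply (pol_subst _ R' Uf Vf); auto; unfold Uf, Vf.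
    eapply pol_ext. apply (pol_aff (e1 / r) (e2 / r) (- (e1 * c1 + e2 * c2) / r)).
    intros; cbv beta; field; lra.
    eapply pol_ext. apply (pol_aff (- e2 / r) (e1 / r) (- (- e2 * c1 + e1 * c2) / r)).
    intros; cbv beta; field; lra.
  - split.
    + intros x y Hxy. destruct (rot_back x y) as [E1 E2].
      replace (g x y) with (G (Uf x y) (Vf x y)) by (unfold G; rewrite E1, E2; auto).
      rewrite E by (apply UV_circ; auto). rewrite Qc_b_circ by auto. field. lra.
    + intros Hm x y Hxy. destruct (rot_back x y) as [E1 E2].
      replace (g x y) with (G (Uf x y) (Vf x y)) by (unfold G; rewrite E1, E2; auto).
      apply Z; auto. apply UV_circ; auto.
Qed.

End Frame.

Lemma inter_fin c1 c2 b1 b2 r : 0 < r -> 0 < (c1 - b1)^2 + (c2 - b2)^2 < 4 * r^2 ->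
  exists p1 p2 q1 q2, forall x y, Qc c1 c2 r x y = 0 -> Qc b1 b2 r x y = 0 ->
    (x = p1 /\ y = p2) \/ (x = q1 /\ y = q2).
Proof.
  intros Hr Hd. eexists _, _, _, _. intros x y H1 H2.
  exact (inter_two c1 c2 b1 b2 r Hr Hd x y H1 H2).
Qed.

Definition prodQ (g1 g2 : R -> R) (r : R) (l : list R) (x y : R) : R :=
  fold_right (fun s acc => Qc (g1 s) (g2 s) r x y * acc) 1 l.

Lemma lp_Q b1 b2 r : lp 1 (Qc b1 b2 r).
Proof.
  eapply lp_ext. apply lp_add. apply (lp_mulw 0 (fun _ _ => 1)), lp_const.
  apply pol_lp, (pol_aff (-2 * b1) (-2 * b2) (b1^2 + b2^2 - r^2)).
  intros; unfold Qc; cbv beta; ring.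
Qed.

Lemma lp_prodQ g1 g2 r l : lp (length l) (prodQ g1 g2 r l).
Proof.
  induction l; simpl.
  - apply (lp_const 0 1).
  - eapply lp_ext. apply (lp_mul 1 (length l) _ _ (lp_Q (g1 a) (g2 a) r) IHl).
    intros; unfold prodQ; simpl; auto.
Qed.

Lemma div_many g1 g2 r c1 c2 : 0 < r -> forall l m D,
  NoDup l ->
  (forall s, In s l -> 0 < (c1 - g1 s)^2 + (c2 - g2 s)^2 < 4 * r^2) ->
  (forall a b, In a l -> In b l -> a <> b -> forall x y, Qc c1 c2 r x y = 0 ->
      Qc (g1 a) (g2 a) r x y = 0 -> Qc (g1 b) (g2 b) r x y = 0 -> False) ->
  pol m D ->
  (forall s, In s l -> forall x y, Qc c1 c2 r x y = 0 -> Qc (g1 s) (g2 s) r x y = 0 -> D x y = 0) ->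
  exists Rq, pol (m - length l) Rq /\
    (forall x y, Qc c1 c2 r x y = 0 -> D x y = Rq x y * prodQ g1 g2 r l x y) /\
    ((m < length l)%nat -> forall x y, Qc c1 c2 r x y = 0 -> D x y = 0).
Proof.
  intros Hr l. induction l as [|s l IH]; intros m D Hnd Hd Htr HD Hz.
  - exists D. split. replace (m - length nil)%nat with m by (simpl; lia); auto.
    split. intros; unfold prodQ; simpl; ring. simpl; intros; lia.
  - inversion Hnd; subst.
    destruct (single_div c1 c2 (g1 s) (g2 s) r Hr (Hd s (or_introl eq_refl)) m D HD
      (Hz s (or_introl eq_refl))) as [R1 [HR1 [E1 Z1]]].
    destruct (IH (pred m) R1 H2) as [Rq [HRq [E2 Z2]]].
    + intros; apply Hd; right; auto.
    + intros a b Ha Hb Hab x y Y1 Y3 Y4. apply (Htr a b (or_intror Ha) (or_intror Hb) Hab x y); auto.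
    + auto.
    + intros b Hb x y Hx Hbx.
      assert (Hsx : Qc (g1 s) (g2 s) r x y <> 0).
      { intro Hs. apply (Htr s b (or_introl eq_refl) (or_intror Hb)) with x y; auto.
        intro; subst; auto. }
      assert (HH : D x y = 0) by (apply (Hz b (or_intror Hb) x y); auto).
      rewrite E1 in HH by auto. apply Rmult_integral in HH as [|]; tauto.
    + exists Rq. split. simpl. replace (m - S (length l))%nat with (pred m - length l)%nat by lia; auto.
      split.
      * intros x y Hx. rewrite E1 by auto. rewrite E2 by auto. unfold prodQ; simpl. ring.
      * simpl. intros Hm x y Hx. destruct m as [|m]. apply Z1; auto.
        rewrite E1 by auto. rewrite Z2; auto. ring. simpl; lia.
Qed.

Lemma ball_R (x y e : R) : ball x e y <-> Rabs (y - x) < e.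
Proof. unfold ball; simpl; unfold AbsRing_ball, abs, minus, plus, opp; simpl. tauto. Qed.

Lemma cont_eps f x : continuous f x -> forall e, 0 < e ->
  exists d, 0 < d /\ forall y, Rabs (y - x) < d -> Rabs (f y - f x) < e.
Proof.
  intros H e He. destruct (proj1 (filterlim_locally f (f x)) H (mkposreal e He)) as [d Hd].
  exists d. split. apply cond_pos. intros y Hy. apply ball_R. apply Hd. apply ball_R. auto.
Qed.

Lemma locally_of_int (P : R -> Prop) x d : 0 < d -> (forall y, Rabs (y - x) < d -> P y) -> locally x P.
Proof. intros Hd H. exists (mkposreal d Hd). intros y Hy. apply H. apply ball_R in Hy. auto. Qed.

Lemma pol_cont d P : pol d P -> forall (u w : R -> R) (s : R), continuous u s -> continuous w s ->
  continuous (fun t => P (u t) (w t)) s.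
Proof.
  induction 1; intros u w s Hu Hw.
  - apply continuous_const.
  - apply (continuous_plus (fun t => f (u t) (w t)) (fun t => g (u t) (w t))); auto.
  - apply (continuous_mult u (fun t => f (u t) (w t))); auto.
  - apply (continuous_mult w (fun t => f (u t) (w t))); auto.
  - auto.
Qed.

Lemma per_nat (f : R -> R) L : (forall s, f (s + L) = f s) ->
  forall n s, f (s + INR n * L) = f s /\ f (s - INR n * L) = f s.
Proof.
  intros H n; induction n; intros s.
  - simpl; split; f_equal; ring.
  - rewrite S_INR. destruct (IHn s) as [A B]. split.
    + replace (s + (INR n + 1) * L) with ((s + INR n * L) + L) by ring. rewrite H; auto.
    + rewrite <- B. replace (s - INR n * L) with ((s - (INR n + 1) * L) + L) by ring.
      rewrite H; auto.
Qed.

Lemma per_Z (f : R -> R) L : (forall s, f (s + L) = f s) ->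
  forall z s, f (s + IZR z * L) = f s.
Proof.
  intros H z s. destruct (Z_le_gt_dec 0 z).
  - rewrite <- (Z2Nat.id z) by lia. rewrite <- INR_IZR_INZ. apply per_nat; auto.
  - replace z with (- Z.of_nat (Z.to_nat (- z)))%Z by lia.
    rewrite opp_IZR, <- INR_IZR_INZ.
    replace (s + - INR (Z.to_nat (- z)) * L) with (s - INR (Z.to_nat (- z)) * L) by ring.
    apply per_nat; auto.
Qed.

Lemma reduce L s : 0 < L -> exists s' z, 0 <= s' < L /\ s = s' + IZR z * L.
Proof.
  intros HL. exists (s - IZR (Int_part (s / L)) * L), (Int_part (s / L)). split; [|ring].
  destruct (base_fp (s / L)) as [A B]. unfold frac_part in *.
  assert (s - IZR (Int_part (s / L)) * L = L * (s / L - IZR (Int_part (s / L)))) by (field; lra).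
  rewrite H. split. apply Rmult_le_pos; lra.
  nra.
Qed.

Lemma IZR_small z : Rabs (IZR z) < 1 -> z = 0%Z.
Proof.
  intros H. destruct (Z.eq_dec z 0); auto. exfalso.
  destruct (Z_le_gt_dec 1 z).
  - apply IZR_le in l. rewrite Rabs_right in H; lra.
  - assert (z <= -1)%Z by lia. apply IZR_le in H0. rewrite Rabs_left in H; lra.
Qed.

Lemma Derive_per (f : R -> R) L : (forall s, f (s + L) = f s) -> (forall s, ex_derive f s) ->
  forall s, Derive f (s + L) = Derive f s.
Proof.
  intros H Hd s.
  assert (E : Derive (fun t => f (t + L)) s = Derive f s).
  { apply Derive_ext. auto. }
  rewrite <- E.
  assert (Hc : is_derive (fun t => f (t + L)) s (1 * Derive f (s + L))).
  { apply (is_derive_comp f (fun t => t + L) s). apply Derive_correct, Hd.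
    auto_derive; auto. }
  transitivity (1 * Derive f (s + L)); [ring|]. symmetry. apply (is_derive_unique _ _ _ Hc).
Qed.

Section Curve.
Variables (g1 g2 : R -> R) (L r rho : R).
Hypothesis Hc : arclength_simple_closed_curve g1 g2 L.
Hypothesis Ht : tubular_radius g1 g2 L rho.
Hypothesis Hr : 0 < r.
Hypothesis Hrr : 2 * r < rho.

Lemma exd1 s : ex_derive g1 s.
Proof. destruct Hc as [H _]. apply (H 1%nat s). Qed.
Lemma exd2 s : ex_derive g2 s.
Proof. destruct Hc as [_ [H _]]. apply (H 1%nat s). Qed.

Lemma tub_inj s s' t t' : Rabs (s - s') < L -> Rabs t < rho -> Rabs t' < rho ->
  g1 s - t * Derive g2 s = g1 s' - t' * Derive g2 s' ->
  g2 s + t * Derive g1 s = g2 s' + t' * Derive g1 s' -> s = s'.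
Proof.
  intros Hss Htt Htt' E1 E2.
  destruct Hc as [_ [_ [HL [Hper _]]]].
  assert (P1 : forall s, g1 (s + L) = g1 s) by (intros; apply Hper).
  assert (P2 : forall s, g2 (s + L) = g2 s) by (intros; apply Hper).
  assert (D1 := Derive_per g1 L P1 exd1). assert (D2 := Derive_per g2 L P2 exd2).
  destruct (reduce L s HL) as [a [z [Ha Ea]]].
  destruct (reduce L s' HL) as [b [z' [Hb Eb]]].
  rewrite Ea, Eb in E1, E2.
  rewrite !per_Z in E1, E2 by auto.
  destruct Ht as [_ Htub].
  destruct (Htub a t b t' Ha Hb Htt Htt' E1 E2) as [Hab _]. subst b.
  assert (z = z').
  { assert (Rabs (IZR (z - z')) < 1).
    { rewrite minus_IZR. rewrite Ea, Eb in Hss.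
      replace (a + IZR z * L - (a + IZR z' * L)) with ((IZR z - IZR z') * L) in Hss by ring.
      rewrite Rabs_mult, (Rabs_right L) in Hss by lra.
      apply (Rmult_lt_reg_r L); lra. }
    apply IZR_small in H. lia. }
  subst; lra.
Qed.

Lemma no_interior p1 p2 u v : u < v -> exists s, u < s < v /\
  (p1 - g1 s)^2 + (p2 - g2 s)^2 - r^2 <> 0.
Proof.
  intros Huv. apply NNPP. intro Hn.
  assert (Hz : forall s, u < s < v -> (p1 - g1 s)^2 + (p2 - g2 s)^2 - r^2 = 0).
  { intros s Hs. apply NNPP. intro. apply Hn. exists s; auto. }
  assert (HL : 0 < L) by (destruct Hc as [_ [_ [HL _]]]; auto).
  assert (Hunit : forall s, (Derive g1 s)^2 + (Derive g2 s)^2 = 1)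
    by (destruct Hc as [_ [_ [_ [_ [_ H]]]]]; auto).
  assert (Key : forall s, u < s < v -> exists t, Rabs t < rho /\
     p1 = g1 s - t * Derive g2 s /\ p2 = g2 s + t * Derive g1 s).
  { intros s Hs.
    assert (Hd : is_derive (fun t => (p1 - g1 t)^2 + (p2 - g2 t)^2 - r^2) s
       (2 * (p1 - g1 s) * (- Derive g1 s) + 2 * (p2 - g2 s) * (- Derive g2 s))).
    { auto_derive. split; [apply exd1|split; [apply exd2|auto]]. change (fun x : R => g1 x) with g1; change (fun x : R => g2 x) with g2; ring. }
    assert (Hd0 : is_derive (fun t => (p1 - g1 t)^2 + (p2 - g2 t)^2 - r^2) s 0).
    { apply (is_derive_ext_loc (fun _ => 0)).
      apply locally_of_int with (Rmin (s - u) (v - s)).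
      apply Rmin_glb_lt; lra.
      intros y Hy. symmetry. apply Hz.
      assert (Rmin (s - u) (v - s) <= s - u) by apply Rmin_l.
      assert (Rmin (s - u) (v - s) <= v - s) by apply Rmin_r.
      apply Rabs_def2 in Hy. lra.
      auto_derive; [auto | ring]. }
    pose proof (is_derive_unique _ _ _ Hd) as U1. pose proof (is_derive_unique _ _ _ Hd0) as U2.
    rewrite U1 in U2.
    set (w1 := Derive g1 s) in *. set (w2 := Derive g2 s) in *.
    set (v1 := p1 - g1 s). set (v2 := p2 - g2 s).
    pose proof (Hunit s) as Hu. fold w1 w2 in Hu.
    assert (Hvv : v1^2 + v2^2 = r^2) by (pose proof (Hz s Hs); unfold v1, v2; lra).
    exists (- v1 * w2 + v2 * w1).
    assert (Horth : v1 * w1 + v2 * w2 = 0) by (unfold v1, v2; lra).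
    assert (E1 : v1 = - (- v1 * w2 + v2 * w1) * w2).
    { transitivity (v1 * (w1^2 + w2^2)). rewrite Hu; ring.
      transitivity ((v1 * w1 + v2 * w2) * w1 - (- v1 * w2 + v2 * w1) * w2). ring.
      rewrite Horth; ring. }
    assert (E2 : v2 = (- v1 * w2 + v2 * w1) * w1).
    { transitivity (v2 * (w1^2 + w2^2)). rewrite Hu; ring.
      transitivity ((v1 * w1 + v2 * w2) * w2 + (- v1 * w2 + v2 * w1) * w1). ring.
      rewrite Horth; ring. }
    split; [|split].
    - assert (Ht2 : (- v1 * w2 + v2 * w1)^2 = r^2).
      { transitivity (v1^2 + v2^2). 2: auto.
        transitivity ((v1^2 + v2^2) * (w1^2 + w2^2) - (v1 * w1 + v2 * w2)^2).
        ring. rewrite Horth, Hu; ring. }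
      assert (Rabs (- v1 * w2 + v2 * w1) = r).
      { rewrite <- (Rabs_right r) by lra. apply Rsqr_eq_abs_0. rewrite !Rsqr_pow2. exact Ht2. }
      lra.
    - transitivity (g1 s + v1). unfold v1; ring. rewrite E1 at 1; ring.
    - transitivity (g2 s + v2). unfold v2; ring. rewrite E2 at 1; ring. }
  set (w := Rmin (v - u) L).
  assert (Hw : 0 < w) by (apply Rmin_glb_lt; lra).
  assert (Hw1 : w <= v - u) by apply Rmin_l.
  assert (Hw2 : w <= L) by apply Rmin_r.
  destruct (Key (u + w / 3)) as [t [Htr [Ea Eb]]]. lra.
  destruct (Key (u + 2 * w / 3)) as [t' [Htr' [Ea' Eb']]]. lra.
  assert (u + w / 3 = u + 2 * w / 3).
  { apply (tub_inj _ _ t t'); auto; try congruence.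
    rewrite Rabs_left; lra. }
  lra.
Qed.

End Curve.

Definition thin (B : R -> Prop) := forall u v, u < v -> exists s, u < s < v /\
  exists d, 0 < d /\ forall s', Rabs (s' - s) < d -> ~ B s'.

Lemma thin_sub (B B' : R -> Prop) : (forall s, B s -> B' s) -> thin B' -> thin B.
Proof.
  intros H T u v Huv. destruct (T u v Huv) as [s [Hs [d [Hd Hn]]]].
  exists s; split; auto. exists d; split; auto. intros s' H' HB. apply (Hn s' H'); auto.
Qed.

Lemma thin_false : thin (fun _ => False).
Proof. intros u v Huv. exists ((u + v) / 2). split. lra. exists 1. split. lra. auto. Qed.

Lemma thin_union B1 B2 : thin B1 -> thin B2 -> thin (fun s => B1 s \/ B2 s).
Proof.
  intros T1 T2 u v Huv. destruct (T1 u v Huv) as [s1 [Hs1 [d1 [Hd1 Hn1]]]].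
  set (u' := Rmax u (s1 - d1)). set (v' := Rmin v (s1 + d1)).
  assert (Hu1 : u <= u') by apply Rmax_l. assert (Hu2 : s1 - d1 <= u') by apply Rmax_r.
  assert (Hv1 : v' <= v) by apply Rmin_l. assert (Hv2 : v' <= s1 + d1) by apply Rmin_r.
  assert (u' < v').
  { unfold u', v'. apply Rmax_lub_lt; apply Rmin_glb_lt; lra. }
  assert (Hu3 : u' = u \/ u' = s1 - d1).
  { unfold u', Rmax. destruct (Rle_dec u (s1 - d1)); auto. }
  assert (Hv3 : v' = v \/ v' = s1 + d1).
  { unfold v', Rmin. destruct (Rle_dec v (s1 + d1)); auto. }
  destruct (T2 u' v' H) as [s2 [Hs2 [d2 [Hd2 Hn2]]]].
  exists s2. split. lra.
  exists (Rmin d2 (Rmin (s2 - u') (v' - s2))). split.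
  apply Rmin_glb_lt; auto. apply Rmin_glb_lt; lra.
  intros s' Hs' [HB|HB].
  - apply (Hn1 s'); auto.
    assert (Rmin d2 (Rmin (s2 - u') (v' - s2)) <= Rmin (s2 - u') (v' - s2)) by apply Rmin_r.
    assert (Rmin (s2 - u') (v' - s2) <= s2 - u') by apply Rmin_l.
    assert (Rmin (s2 - u') (v' - s2) <= v' - s2) by apply Rmin_r.
    apply Rabs_def2 in Hs'. apply Rabs_def1; lra.
  - apply (Hn2 s'); auto.
    assert (Rmin d2 (Rmin (s2 - u') (v' - s2)) <= d2) by apply Rmin_l. lra.
Qed.

Lemma thin_exists_list {A : Type} (S : list A) (P : A -> R -> Prop) :
  (forall b, In b S -> thin (P b)) -> thin (fun s => exists b, In b S /\ P b s).
Proof.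
  induction S as [|a S IH]; intros H.
  - apply thin_sub with (fun _ => False). intros s [b [[] _]]. apply thin_false.
  - apply thin_sub with (fun s => P a s \/ exists b, In b S /\ P b s).
    + intros s [b [[E|Hb] Hp]]. subst; auto. right; eauto.
    + apply thin_union. apply H; left; auto. apply IH. intros; apply H; right; auto.
Qed.

Lemma thin_point a : thin (fun s => s = a).
Proof.
  intros u v Huv.
  destruct (Req_dec ((u + v) / 2) a).
  - exists ((u + a) / 2). split. lra. exists ((a - u) / 2). split. lra.
    intros s' Hs' E. subst. apply Rabs_def2 in Hs'. lra.
  - exists ((u + v) / 2). split. lra. exists (Rabs ((u + v) / 2 - a)). split.
    apply Rabs_pos_lt; lra.
    intros s' Hs' E. subst. rewrite <- Rabs_Ropp in Hs'.
    replace (- (a - (u + v) / 2)) with ((u + v) / 2 - a) in Hs' by ring. lra.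
Qed.

Lemma prodQ_zero g1 g2 r S a x y : In a S -> Qc (g1 a) (g2 a) r x y = 0 -> prodQ g1 g2 r S x y = 0.
Proof.
  induction S as [|b S IH]; simpl; intros Hin Hq. destruct Hin.
  destruct Hin as [E|H].
  - subst. rewrite Hq. ring.
  - rewrite IH; auto. ring.
Qed.

Section Main.
Variables (g1 g2 : R -> R) (L r rho : R).
Hypothesis Hc : arclength_simple_closed_curve g1 g2 L.
Hypothesis Ht : tubular_radius g1 g2 L rho.
Hypothesis Hr : 0 < r.
Hypothesis Hrr : 2 * r < rho.

Definition T3 a b s := exists x y, Qc (g1 a) (g2 a) r x y = 0 /\ Qc (g1 b) (g2 b) r x y = 0 /\
   Qc (g1 s) (g2 s) r x y = 0.

Lemma cont_Q p1 p2 s : continuous (fun t => Qc (g1 t) (g2 t) r p1 p2) s.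
Proof.
  apply (ex_derive_continuous (K := R_AbsRing) (V := R_NormedModule) (fun t => Qc (g1 t) (g2 t) r p1 p2)). unfold Qc. auto_derive.
  split; [apply (exd1 g1 g2 L Hc)|split; [apply (exd2 g1 g2 L Hc)|auto]].
Qed.

Lemma thin_Z p1 p2 : thin (fun s => Qc (g1 s) (g2 s) r p1 p2 = 0).
Proof.
  intros u v Huv. destruct (no_interior g1 g2 L r rho Hc Ht Hr Hrr p1 p2 u v Huv) as [s [Hs Hq]].
  exists s. split; auto.
  assert (Hq' : Qc (g1 s) (g2 s) r p1 p2 <> 0) by (unfold Qc; auto).
  destruct (cont_eps _ _ (cont_Q p1 p2 s) (Rabs (Qc (g1 s) (g2 s) r p1 p2)))
    as [d [Hd Hn]]. apply Rabs_pos_lt; auto.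
  exists d. split; auto. intros s' Hs' E. specialize (Hn s' Hs'). rewrite E in Hn.
  rewrite Rminus_0_l, Rabs_Ropp in Hn. lra.
Qed.

Lemma thin_T a b : 0 < (g1 a - g1 b)^2 + (g2 a - g2 b)^2 < 4 * r^2 -> thin (T3 a b).
Proof.
  intros Hd. destruct (inter_fin (g1 a) (g2 a) (g1 b) (g2 b) r Hr Hd) as [p1 [p2 [q1 [q2 Hpq]]]].
  apply thin_sub with (fun s => Qc (g1 s) (g2 s) r p1 p2 = 0 \/ Qc (g1 s) (g2 s) r q1 q2 = 0).
  - intros s [x [y [H1 [H2 H3]]]]. destruct (Hpq x y H1 H2) as [[-> ->]|[-> ->]]; auto.
  - apply thin_union; apply thin_Z.
Qed.

Definition Bad (S : list R) s := In s S \/ exists a, In a S /\ exists b, In b S /\ (a <> b /\ T3 a b s).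

Lemma thin_Bad S : (forall a b, In a S -> In b S -> a <> b ->
   0 < (g1 a - g1 b)^2 + (g2 a - g2 b)^2 < 4 * r^2) -> thin (Bad S).
Proof.
  intros HS. apply thin_union.
  - apply thin_sub with (fun s => exists b, In b S /\ s = b).
    intros s H; exists s; auto.
    apply thin_exists_list. intros; apply thin_point.
  - apply thin_exists_list. intros a Ha. apply thin_exists_list. intros b Hb.
    destruct (Req_dec a b).
    + apply thin_sub with (fun _ => False). intros s [? _]; contradiction. apply thin_false.
    + apply thin_sub with (T3 a b). intros s [_ H']; auto. apply thin_T; auto.
Qed.

End Main.

Lemma cont_R (f : R -> R) x : ex_derive f x -> continuous f x.
Proof. apply (ex_derive_continuous (K := R_AbsRing) (V := R_NormedModule)). Qed.

Theorem lemma6p1 :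
  forall (g1 g2 : R -> R) (L r : R),
    arclength_simple_closed_curve g1 g2 L ->
    0 < r ->
    (exists rho, tubular_radius g1 g2 L rho /\ 2 * r < rho) ->
    forall s0 : R,
    exists eps0 : R, 0 < eps0 /\
    forall (eps : R), 0 < eps < eps0 ->
    forall (N : nat) (F : R -> R -> R),
      smooth2 F ->
      (forall s, Rabs (s - s0) < eps ->
         exists Ps, is_poly2 N Ps /\
           forall x1 x2, on_circle g1 g2 r s x1 x2 -> F x1 x2 = Ps x1 x2) ->
      exists P, is_poly2 (2 * N) P /\
        forall x1 x2, in_A g1 g2 r s0 eps x1 x2 -> F x1 x2 = P x1 x2.
Proof.
  intros g1 g2 L r Hc Hr [rho [Ht Hrr]] s0.
  assert (HL : 0 < L) by (destruct Hc as [_ [_ [HL _]]]; auto).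
  destruct (cont_eps _ _ (cont_R g1 s0 (exd1 g1 g2 L Hc s0)) (r / 2)) as [d1 [Hd1 C1]]. lra.
  destruct (cont_eps _ _ (cont_R g2 s0 (exd2 g1 g2 L Hc s0)) (r / 2)) as [d2 [Hd2 C2]]. lra.
  set (e0 := Rmin (Rmin d1 d2) (L / 2)).
  assert (He1 : e0 <= d1) by (unfold e0; eapply Rle_trans; [apply Rmin_l|apply Rmin_l]).
  assert (He2 : e0 <= d2) by (unfold e0; eapply Rle_trans; [apply Rmin_l|apply Rmin_r]).
  assert (He3 : e0 <= L / 2) by (unfold e0; apply Rmin_r).
  exists e0. split. unfold e0; apply Rmin_glb_lt; [apply Rmin_glb_lt|]; lra.
  intros eps [Heps Heps0] N F HF Hyp.
  assert (Close : forall a b, Rabs (a - s0) < eps -> Rabs (b - s0) < eps -> a <> b ->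
     0 < (g1 a - g1 b)^2 + (g2 a - g2 b)^2 < 4 * r^2).
  { intros a b Ha Hb Hab.
    assert (A1 : Rabs (g1 a - g1 s0) < r / 2) by (apply C1; lra). assert (A2 : Rabs (g2 a - g2 s0) < r / 2) by (apply C2; lra).
    assert (B1 : Rabs (g1 b - g1 s0) < r / 2) by (apply C1; lra). assert (B2 : Rabs (g2 b - g2 s0) < r / 2) by (apply C2; lra).
    apply Rabs_def2 in A1, A2, B1, B2.
    split.
    - pose proof (pow2_ge_0 (g1 a - g1 b)). pose proof (pow2_ge_0 (g2 a - g2 b)).
      assert (Hnn : 0 <= (g1 a - g1 b)^2 + (g2 a - g2 b)^2) by lra.
      destruct (Rle_lt_or_eq_dec _ _ Hnn) as [|E]; auto.
      exfalso. apply Hab.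
      assert (E1' : (g1 a - g1 b)^2 = 0) by lra. assert (E2' : (g2 a - g2 b)^2 = 0) by lra.
      assert (Z1 : g1 a - g1 b = 0) by (apply NNPP; intro Hn; apply (pow_nonzero _ 2 Hn); auto).
      assert (Z2 : g2 a - g2 b = 0) by (apply NNPP; intro Hn; apply (pow_nonzero _ 2 Hn); auto).
      assert (E1 : g1 a = g1 b) by lra. assert (E2 : g2 a = g2 b) by lra.
      apply (tub_inj g1 g2 L rho Hc Ht a b 0 0).
      apply Rabs_def2 in Ha. apply Rabs_def2 in Hb. apply Rabs_def1; lra.
      rewrite Rabs_R0; lra. rewrite Rabs_R0; lra.
      rewrite E1; ring. rewrite E2; ring.
    - assert (X1 : (g1 a - g1 b)^2 < r^2).
      { assert (- r < g1 a - g1 b < r) by lra.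
        assert ((g1 a - g1 b)^2 - r^2 = (g1 a - g1 b - r) * (g1 a - g1 b + r)) by ring. nra. }
      assert (X2 : (g2 a - g2 b)^2 < r^2).
      { assert (- r < g2 a - g2 b < r) by lra.
        assert ((g2 a - g2 b)^2 - r^2 = (g2 a - g2 b - r) * (g2 a - g2 b + r)) by ring. nra. }
      nra. }
  assert (Hthin : forall S, (forall a, In a S -> Rabs (a - s0) < eps) -> thin (Bad g1 g2 r S)).
  { intros S HS. apply (thin_Bad g1 g2 L r rho Hc Ht Hr Hrr S).
    intros a b Ha Hb Hab. apply Close; auto. }
  assert (OnC : forall s x y, Qc (g1 s) (g2 s) r x y = 0 -> on_circle g1 g2 r s x y).
  { intros s x y H. unfold Qc in H; unfold on_circle; lra. }
  assert (Step : forall S P s, NoDup S -> (forall a, In a S -> Rabs (a - s0) < eps) -> lp N P ->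
     (forall a x y, In a S -> Qc (g1 a) (g2 a) r x y = 0 -> F x y = P x y) ->
     Rabs (s - s0) < eps -> ~ Bad g1 g2 r S s ->
     exists Rq, pol (N - length S) Rq /\
       (forall x y, Qc (g1 s) (g2 s) r x y = 0 -> F x y = P x y + Rq x y * prodQ g1 g2 r S x y) /\
       ((N < length S)%nat -> forall x y, Qc (g1 s) (g2 s) r x y = 0 -> F x y = P x y)).
  { intros S P s Hnd HS HP HF' Hs HnB.
    destruct (Hyp s Hs) as [Ps [HPs EPs]].
    destruct (lp_circle N P (g1 s) (g2 s) r HP) as [g [Hg Eg]].
    assert (Hg' : forall x y, Qc (g1 s) (g2 s) r x y = 0 -> P x y = g x y).
    { intros x y H. apply Eg. unfold Qc in H; lra. }
    assert (HnS : ~ In s S) by (intro; apply HnB; left; auto).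
    destruct (div_many g1 g2 r (g1 s) (g2 s) Hr S N (fun x y => Ps x y - g x y) Hnd)
      as [Rq [HRq [E Z]]].
    - intros a Ha. apply Close; auto. intro; subst; auto.
    - intros a b Ha Hb Hab x y H1 H2 H3. apply HnB. right. exists a. split; auto.
      exists b. split; auto. split; auto. exists x, y. auto.
    - apply pol_sub; auto. apply is_poly2_pol; auto.
    - intros a Ha x y H1 H2. rewrite <- EPs by auto. rewrite <- Hg' by auto.
      rewrite (HF' a x y Ha H2). ring.
    - exists Rq. split; auto. split.
      + intros x y H. rewrite EPs by auto. rewrite Hg' by auto.
        rewrite <- E by auto. ring.
      + intros Hlt x y H. rewrite EPs by auto. rewrite Hg' by auto.
        assert (Ps x y - g x y = 0) by (apply Z; auto). lra. }
  assert (Constr : forall k, (k <= S N)%nat -> exists S P, length S = k /\ NoDup S /\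
     (forall a, In a S -> Rabs (a - s0) < eps) /\ lp N P /\
     (forall a x y, In a S -> Qc (g1 a) (g2 a) r x y = 0 -> F x y = P x y)).
  { induction k; intros Hk.
    - exists nil, (fun _ _ => 0). repeat split; auto. constructor. intros a []. apply lp_const.
      intros a x y [].
    - destruct (IHk ltac:(lia)) as [S [P [Hlen [Hnd [HS [HP HFP]]]]]].
      destruct (Hthin S HS (s0 - eps) (s0 + eps) ltac:(lra)) as [s [Hs [d [Hd Hn]]]].
      assert (HnB : ~ Bad g1 g2 r S s) by (apply Hn; rewrite Rminus_eq_0, Rabs_R0; auto).
      assert (Hs' : Rabs (s - s0) < eps) by (apply Rabs_def1; lra).
      destruct (Step S P s Hnd HS HP HFP Hs' HnB) as [Rq [HRq [E _]]].
      exists (s :: S), (fun x y => P x y + Rq x y * prodQ g1 g2 r S x y).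
      split. simpl; auto. split. constructor; auto. intro; apply HnB; left; auto.
      split. intros a [<-|Ha]; auto.
      split. apply lp_add; auto. apply lp_le with (N - length S + length S)%nat. lia.
      apply lp_mul. apply pol_lp; auto. apply lp_prodQ.
      intros a x y [<-|Ha] Hq. apply E; auto.
      rewrite (prodQ_zero g1 g2 r S a x y Ha Hq), (HFP a x y Ha Hq). ring. }
  destruct (Constr (S N) (le_n _)) as [S [P [Hlen [Hnd [HS [HP HFP]]]]]].
  exists P. split.
  { apply pol_is_poly2. apply lp_pol; auto. }
  assert (Good : forall s x y, Rabs (s - s0) < eps -> ~ Bad g1 g2 r S s ->
     Qc (g1 s) (g2 s) r x y = 0 -> F x y = P x y).
  { intros s x y Hs HnB Hq. destruct (Step S P s Hnd HS HP HFP Hs HnB) as [Rq [_ [_ Z]]].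
    apply Z; auto. lia. }
  intros x1 x2 [s [Hs Hon]].
  set (v1 := x1 - g1 s). set (v2 := x2 - g2 s).
  set (h := fun t => F (g1 t + v1) (g2 t + v2) - P (g1 t + v1) (g2 t + v2)).
  assert (Hu : forall t, continuous (fun t => g1 t + v1) t).
  { intros t. apply cont_R. auto_derive. apply (exd1 g1 g2 L Hc). }
  assert (Hw : forall t, continuous (fun t => g2 t + v2) t).
  { intros t. apply cont_R. auto_derive. apply (exd2 g1 g2 L Hc). }
  assert (Hh : continuous h s).
  { unfold h. eapply continuous_ext.
    2: { apply (continuous_minus (fun t => F (g1 t + v1) (g2 t + v2)) (fun t => P (g1 t + v1) (g2 t + v2))).
         apply (continuous_comp_2 (fun t => g1 t + v1) (fun t => g2 t + v2) F); auto.
         apply (HF nil).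
         apply (pol_cont _ P (lp_pol _ _ HP)); auto. }
    intros t. reflexivity. }
  assert (Ex : F x1 x2 = F (g1 s + v1) (g2 s + v2)) by (unfold v1, v2; f_equal; ring).
  assert (Ep : P x1 x2 = P (g1 s + v1) (g2 s + v2)) by (unfold v1, v2; f_equal; ring).
  destruct (Req_dec (h s) 0) as [H0|H0].
  { unfold h in H0. lra. }
  exfalso.
  destruct (cont_eps h s Hh (Rabs (h s))) as [d [Hd Hn]]. apply Rabs_pos_lt; auto.
  set (u := Rmax (s0 - eps) (s - d)). set (v := Rmin (s0 + eps) (s + d)).
  assert (U1 : s0 - eps <= u) by apply Rmax_l. assert (U2 : s - d <= u) by apply Rmax_r.
  assert (V1 : v <= s0 + eps) by apply Rmin_l. assert (V2 : v <= s + d) by apply Rmin_r.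
  assert (Hs2 : -eps <= s - s0 <= eps).
  { pose proof (Rle_abs (s - s0)). pose proof (Rle_abs (-(s - s0))). rewrite Rabs_Ropp in *. lra. }
  assert (Huv : u < v).
  { unfold u, v. apply Rmax_lub_lt; apply Rmin_glb_lt; lra. }
  destruct (Hthin S HS u v Huv) as [s' [Hs' [d' [Hd' Hn']]]].
  assert (HnB : ~ Bad g1 g2 r S s') by (apply Hn'; rewrite Rminus_eq_0, Rabs_R0; auto).
  assert (Hin : Rabs (s' - s0) < eps).
  { assert (u < s' < v) by auto.
    assert (Hu3 : u = s0 - eps \/ u = s - d) by (unfold u, Rmax; destruct (Rle_dec (s0 - eps) (s - d)); auto).
    assert (Hv3 : v = s0 + eps \/ v = s + d) by (unfold v, Rmin; destruct (Rle_dec (s0 + eps) (s + d)); auto).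
    apply Rabs_def1; lra. }
  assert (Hclose : Rabs (s' - s) < d).
  { assert (Hu3 : u = s0 - eps \/ u = s - d) by (unfold u, Rmax; destruct (Rle_dec (s0 - eps) (s - d)); auto).
    assert (Hv3 : v = s0 + eps \/ v = s + d) by (unfold v, Rmin; destruct (Rle_dec (s0 + eps) (s + d)); auto).
    apply Rabs_def1; lra. }
  assert (Hz : h s' = 0).
  { unfold h. rewrite (Good s' (g1 s' + v1) (g2 s' + v2)); auto. ring.
    unfold Qc. unfold on_circle in Hon. unfold v1, v2.
    replace (g1 s' + (x1 - g1 s) - g1 s') with (x1 - g1 s) by ring.
    replace (g2 s' + (x2 - g2 s) - g2 s') with (x2 - g2 s) by ring. lra. }
  specialize (Hn s' Hclose). rewrite Hz, Rminus_0_l, Rabs_Ropp in Hn. lra.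
Qed.
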